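(* Let $n,k_1,k_2$ be nonnegative integers with $k_1+k_2\le n$ and $\ell=n-k_1-k_2$. If $G\in\mathcal{S}$, then there is a matrix $G'\in\mathcal{T}$ such that the $\mathbb{Z}_4$-codes with generator matrices $G$ and $G'$ are equivalent.
   Context: $\mathbb{Z}_4=\{0,1,2,3\}$ is the ring of integers modulo $4$; a $\mathbb{Z}_4$-code of length $n$ is a submodule of $\mathbb{Z}_4^n$, and two codes are equivalent if one is obtained from the other by permuting coordinates and changing the signs of some coordinates. Order $\mathbb{Z}_4$ by $0<1<2<3$ and order vectors of $\mathbb{Z}_4^m$ lexicographically (compare first differing coordinate). Let $M_{m\times n}(R)$ denote the set of $m\times n$ matrices with entries in $R$. For $T\subset M_{m\times n}(\mathbb{Z}_4)$ let $P_{row}(T)$ be the set of matrices in $T$ whose rows $a_1,\dots,a_m$ satisfy $a_i\le a_j$ whenever $i\le j$. For $(0,1)$-matrices $A$ ($k_1\times k_2$), $D$ ($k_2\times\ell$) and a $\mathbb{Z}_4$-matrix $B$ ($k_1\times\ell$), let $G(A,B,D)=\begin{pmatrix} I_{k_1} & A & B\\ O & 2I_{k_2} & 2D\end{pmatrix}$ (a $\mathbb{Z}_4$-matrix, $I_k$ identity, $O$ zero matrix). Let $\mathcal{S}=\{G(A,B,D)\mid A\in M_{k_1\times k_2}(\{0,1\}),\ B\in M_{k_1\times\ell}(\mathbb{Z}_4),\ D\in M_{k_2\times\ell}(\{0,1\})\}$ and $\mathcal{T}=\{G(A,B,D)\in\mathcal{S}\mid A\in P_{row}(M_{k_1\times k_2}(\{0,1\}))\}$.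 *)

(* Defs.v *)
From mathcomp Require Import all_boot all_order all_algebra.
From mathcomp Require Import fingroup perm.
Set Implicit Arguments. Unset Strict Implicit. Unset Printing Implicit Defensive.
Import GRing.Theory.
Local Open Scope ring_scope.

(* Z_4 is 'Z_4 (convertible to 'I_4); the order 0<1<2<3 is that of the
   underlying natural numbers. *)
Notation Z4 := 'Z_4.

Definition is01 (m n : nat) (M : 'M[Z4]_(m, n)) : bool :=
  [forall i, forall j, (M i j == 0) || (M i j == 1)].

Fixpoint lexle (s t : seq nat) : bool :=
  match s, t with
  | [::], _ => true
  | _ :: _, [::] => false
  | x :: s', y :: t' => (x < y)%N || ((x == y) && lexle s' t')
  end.

Definition rowseq (m n : nat) (M : 'M[Z4]_(m, n)) (i : 'I_m) : seq nat :=
  [seq nat_of_ord (M i j) | j <- enum 'I_n].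

Definition P_row (m n : nat) (M : 'M[Z4]_(m, n)) : bool :=
  [forall i : 'I_m, forall j : 'I_m, (i <= j)%N ==> lexle (rowseq M i) (rowseq M j)].

(* G(A,B,D) = [ I_{k1}  A      B  ]
              [ O       2I_{k2} 2D ]   with n = k1 + k2 + l columns *)
Definition GABD (k1 k2 l : nat) (A : 'M[Z4]_(k1, k2)) (B : 'M[Z4]_(k1, l))
  (D : 'M[Z4]_(k2, l)) : 'M[Z4]_(k1 + k2, k1 + k2 + l) :=
  block_mx (row_mx 1%:M A) B (row_mx 0 (2%:R)%:M) (2%:R *: D).

Definition code (m n : nat) (G : 'M[Z4]_(m, n)) : {set 'rV[Z4]_n} :=
  [set x | [exists v : 'rV[Z4]_m, x == v *m G]].

Definition equiv_code (n : nat) (C1 C2 : {set 'rV[Z4]_n}) : Prop :=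
  exists (s : 'S_n) (e : 'I_n -> bool),
    C2 = [set \row_j ((-1) ^+ e j * x 0 (s j)) | x : 'rV[Z4]_n in C1].

(* Main.v *)
Require Import Defs.
From mathcomp Require Import all_boot all_order all_algebra.
From mathcomp Require Import fingroup perm.
Set Implicit Arguments. Unset Strict Implicit. Unset Printing Implicit Defensive.
Import GRing.Theory.

Lemma lexle_refl : reflexive lexle.
Proof. by elim=> //= x s IH; rewrite eqxx IH ltnn. Qed.

Lemma lexle_total : total lexle.
Proof.
elim=> [|x s IH] [|y t] //=.
case: (ltngtP x y) => // _; rewrite ?orbT //.
by move: (IH t); case: (lexle s t); case: (lexle t s).
Qed.

Lemma lexle_trans : transitive lexle.
Proof.
move=> t s; elim: s t => [|x s IH] [|y t] [|z u] //=.
case/orP=> [xy|/andP[/eqP-> st]]; case/orP=> [yz|/andP[/eqP<- tu]].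
- by rewrite (ltn_trans xy yz).
- by rewrite xy.
- by rewrite yz.
- by rewrite eqxx (IH _ _ st tu) orbT.
Qed.

Section Sorting.
Variable k : nat.
Variable r : rel 'I_k.
Hypothesis r_tr : transitive r.
Hypothesis r_refl : reflexive r.
Hypothesis r_tot : total r.

Let s := sort r (enum 'I_k).
Lemma size_s : size s = k.
Proof. by rewrite size_sort size_enum_ord. Qed.
Lemma uniq_s : uniq s.
Proof. by rewrite sort_uniq enum_uniq. Qed.

Definition sortf (i : 'I_k) : 'I_k := nth i s i.
Lemma sortf_inj : injective sortf.
Proof.
move=> i j; rewrite /sortf => e.
have hi : (i < size s)%N by rewrite size_s.
have hj : (j < size s)%N by rewrite size_s.
move: e; rewrite (set_nth_default i j hj) => /eqP.
rewrite (nth_uniq i hi hj uniq_s) => /eqP ij; exact: val_inj.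
Qed.

Definition sortp : 'S_k := perm sortf_inj.

Lemma sortp_sorted (i j : 'I_k) : (i <= j)%N -> r (sortp i) (sortp j).
Proof.
move=> ij; rewrite !permE /sortf.
have hi : (i < size s)%N by rewrite size_s.
have hj : (j < size s)%N by rewrite size_s.
rewrite (set_nth_default i j hj).
apply: (sorted_leq_nth r_tr r_refl i (sort_sorted r_tot _)) => //.
Qed.
End Sorting.

Local Open Scope ring_scope.

Definition extf m n (p : 'S_m) (j : 'I_(m + n)) : 'I_(m + n) :=
  unsplit (match split j with inl a => inl (p a) | inr b => inr b end).

Lemma extf_inj m n (p : 'S_m) : injective (@extf m n p).
Proof.
move=> i j; rewrite /extf => /(can_inj unsplitK).
rewrite -(splitK i) -(splitK j) !unsplitK.
case: (split i) => [a|a]; case: (split j) => [b|b] //= [] e.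
- by rewrite (perm_inj e).
- by rewrite e.
Qed.

Definition extp m n (p : 'S_m) : 'S_(m + n) := perm (@extf_inj m n p).

Lemma extpL m n (p : 'S_m) a : extp n p (lshift n a) = lshift n (p a).
Proof. by rewrite permE /extf (unsplitK (inl _)). Qed.
Lemma extpR m n (p : 'S_m) a : extp n p (rshift m a) = rshift m a.
Proof. by rewrite permE /extf (unsplitK (inr _)). Qed.

Lemma GABD_perm (k1 k2 l : nat) (A : 'M[Z4]_(k1, k2)) (B : 'M[Z4]_(k1, l))
  (D : 'M[Z4]_(k2, l)) (p : 'S_k1) i j :
  GABD (\matrix_(i, j) A (p i) j) (\matrix_(i, j) B (p i) j) D i j =
  GABD A B D (extp k2 p i) (extp l (extp k2 p) j).
Proof.
rewrite /GABD -(splitK i) -(splitK j).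
case: (split i) => a; case: (split j) => b /=.
- rewrite !extpL -(splitK b); case: (split b) => c /=.
  + by rewrite extpL !block_mxEul !row_mxEl !mxE (inj_eq perm_inj).
  + by rewrite extpR !block_mxEul !row_mxEr !mxE.
- by rewrite extpL !extpR !block_mxEur !mxE.
- rewrite extpR extpL -(splitK b); case: (split b) => c /=.
  + by rewrite extpL !block_mxEdl !row_mxEl !mxE.
  + by rewrite extpR !block_mxEdl !row_mxEr.
- by rewrite !extpR !block_mxEdr.
Qed.

Theorem mainTheorem9 (k1 k2 l : nat)
  (A : 'M[Z4]_(k1, k2)) (B : 'M[Z4]_(k1, l)) (D : 'M[Z4]_(k2, l)) :
  is01 A -> is01 D ->
  exists (A' : 'M[Z4]_(k1, k2)) (B' : 'M[Z4]_(k1, l)) (D' : 'M[Z4]_(k2, l)),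
    [/\ is01 A', is01 D', P_row A' &
        equiv_code (code (GABD A B D)) (code (GABD A' B' D'))].
Proof.
move=> hA hD.
pose r : rel 'I_k1 := fun i j => lexle (rowseq A i) (rowseq A j).
have r_tr : transitive r by move=> ???; apply: lexle_trans.
have r_refl : reflexive r by move=> ?; apply: lexle_refl.
have r_tot : total r by move=> ??; apply: lexle_total.
pose p := sortp r.
exists (\matrix_(i, j) A (p i) j), (\matrix_(i, j) B (p i) j), D; split=> //.
- apply/forallP=> i; apply/forallP=> j; rewrite mxE.
  by move/forallP: hA => /(_ (p i)) /forallP /(_ j).
- apply/forallP=> i; apply/forallP=> j; apply/implyP=> ij.
  have e : forall x, rowseq (\matrix_(i, j) A (p i) j) x = rowseq A (p x).
    by move=> x; rewrite /rowseq; apply: eq_map => y; rewrite mxE.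
  by rewrite !e; exact: (sortp_sorted r_tr r_refl r_tot ij).
pose q := extp k2 p; pose t := extp l q.
exists t, (fun _ => false).
apply/setP=> x; rewrite inE; apply/existsP/imsetP.
- case=> v /eqP ->.
  exists (\row_i v 0 ((q^-1)%g i) *m GABD A B D).
    by rewrite inE; apply/existsP; exists (\row_i v 0 ((q^-1)%g i)).
  apply/rowP=> j; rewrite !mxE mul1r.
  rewrite [RHS](reindex_inj (@perm_inj _ q)) /=.
  apply: eq_bigr => i _; by rewrite GABD_perm [in RHS]mxE permK.
- case=> y; rewrite inE => /existsP [w /eqP ->] ->.
  exists (\row_i w 0 (q i)); apply/eqP/rowP=> j; rewrite !mxE mul1r.
  rewrite [LHS](reindex_inj (@perm_inj _ q)) /=.
  apply: eq_bigr => i _; by rewrite GABD_perm [in RHS]mxE.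
Qed.
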